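(* Consider the GNEP described below, and let $\bar x$ be a KKT point of the associated Feasibility GNEP. Assume that the GNEP satisfies GNEP-EMFCQ in $\bar x$ (with respect to the constraint functions $c^\nu=(g^\nu,h^\nu)$). Then $g^\nu(\bar x)\le 0$ for every $\nu$, i.e. $\bar x$ is feasible for the GNEP; in particular, $\bar x$ is a solution of the Feasibility GNEP.
   Context: GNEP: $N$ players, variables $x=(x^1,\ldots,x^N)\in\mathbb{R}^n$, $x^\nu\in\mathbb{R}^{n_\nu}$. Player $\nu$ solves $\min_{x^\nu}\theta_\nu(x)$ s.t. $g^\nu(x)\le0$, $h^\nu(x)\le0$, with continuously differentiable $\theta_\nu:\mathbb{R}^n\to\mathbb{R}$, $g^\nu:\mathbb{R}^n\to\mathbb{R}^{m_\nu}$, $h^\nu:\mathbb{R}^n\to\mathbb{R}^{p_\nu}$. Notation: $v_+=\max\{0,v\}$ componentwise, $\nabla_{x^\nu}$ the partial (transposed) Jacobian w.r.t. $x^\nu$, $\min$ componentwise. Feasibility GNEP: player $\nu$ solves $\min_{x^\nu}\|g^\nu_+(x)\|^2$ s.t. $h^\nu(x)\le0$. $\bar x$ is a KKT point of it if for every $\nu$ there is $w^\nu\in\mathbb{R}^{p_\nu}$ with $\nabla_{x^\nu}\|g^\nu_+(\bar x)\|^2+\nabla_{x^\nu}h^\nu(\bar x)w^\nu=0$ and $\min\{-h^\nu(\bar x),w^\nu\}=0$. A solution of the Feasibility GNEP is a point $\bar x$ with $h^\nu(\bar x)\le 0$ and, for each $\nu$, $\|g^\nu_+(\bar x)\|^2\le\|g^\nu_+(x^\nu,\bar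 x^{-\nu})\|^2$ for all $x^\nu$ with $h^\nu(x^\nu,\bar x^{-\nu})\le0$. GNEP-EMFCQ at $x$: for every $\nu$ there is $d^\nu\in\mathbb{R}^{n_\nu}$ such that $\nabla_{x^\nu}c_i^\nu(x)^Td^\nu<0$ for every component $c_i^\nu$ of $c^\nu=(g^\nu,h^\nu)$ with $c_i^\nu(x)\ge0$. *)

(* Defs.v *)
From HB Require Import structures.
From mathcomp Require Import all_boot all_order all_algebra.
From mathcomp Require Import all_classical all_reals all_analysis.
Set Implicit Arguments. Unset Strict Implicit. Unset Printing Implicit Defensive.
Import Order.TTheory GRing.Theory Num.Theory.
Import numFieldNormedType.Exports.
Local Open Scope ring_scope.

Section GNEP.
Variables (R : realType) (n N : nat).
(* owner j = the player nu controlling coordinate j of x; the block x^nu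
   consists of the coordinates j with owner j = nu. *)
Variable owner : 'I_n -> 'I_N.

Definition unitv (j : 'I_n) : 'rV[R]_n := delta_mx 0 j.

Definition pd (f : 'rV[R]_n -> R) (x : 'rV[R]_n) (j : 'I_n) : R :=
  'D_(unitv j) f x.

Definition C1 (f : 'rV[R]_n -> R) : Prop :=
  (forall x, differentiable f x) /\ (forall j, continuous (fun x => pd f x j)).

Definition sqnorm_plus (q : nat) (f : 'I_q -> 'rV[R]_n -> R) (x : 'rV[R]_n) : R :=
  \sum_(i < q) (Num.max 0 (f i x)) ^+ 2.

Definition replace (x : 'rV[R]_n) (nu : 'I_N) (y : 'rV[R]_n) : 'rV[R]_n :=
  \row_j (if owner j == nu then y 0 j else x 0 j).

Unset Implicit Arguments.
Variables (m p : 'I_N -> nat).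
Variable g : forall nu : 'I_N, 'I_(m nu) -> 'rV[R]_n -> R.
Variable h : forall nu : 'I_N, 'I_(p nu) -> 'rV[R]_n -> R.

Definition feas_KKT (xb : 'rV[R]_n) : Prop :=
  forall nu : 'I_N, exists w : 'I_(p nu) -> R,
    (forall j : 'I_n, owner j = nu ->
       pd (@sqnorm_plus (m nu) (g nu)) xb j + \sum_(k < p nu) pd (h nu k) xb j * w k = 0)
    /\ (forall k, Num.min (- h nu k xb) (w k) = 0).

Definition feas_solution (xb : 'rV[R]_n) : Prop :=
  (forall nu k, h nu k xb <= 0) /\
  forall nu (y : 'rV[R]_n), (forall k, h nu k (replace xb nu y) <= 0) ->
    @sqnorm_plus (m nu) (g nu) xb <= @sqnorm_plus (m nu) (g nu) (replace xb nu y).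

Definition GNEP_EMFCQ (x : 'rV[R]_n) : Prop :=
  forall nu : 'I_N, exists d : 'I_n -> R,
    (forall i, 0 <= g nu i x ->
       \sum_(j | owner j == nu) pd (g nu i) x j * d j < 0) /\
    (forall k, 0 <= h nu k x ->
       \sum_(j | owner j == nu) pd (h nu k) x j * d j < 0).
End GNEP.
Arguments feas_KKT {R n N} owner {m p} g h xb.
Arguments feas_solution {R n N} owner {m p} g h xb.
Arguments GNEP_EMFCQ {R n N} owner {m p} g h x.

(* Main.v *)
Require Import Defs.
From HB Require Import structures.
From mathcomp Require Import all_boot all_order all_algebra.
From mathcomp Require Import all_classical all_reals all_analysis.
From mathcomp Require Import ring lra.
Import Order.TTheory GRing.Theory Num.Theory.
Import numFieldNormedType.Exports.
Local Open Scope classical_set_scope.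
Local Open Scope ring_scope.

Section Aux.
Variable R : realType.
Definition phi (t : R) : R := (Num.max 0 t) ^+ 2.

Lemma phi_bound (t h : R) : `|phi (h + t) - phi t - 2 * Num.max 0 t * h| <= h ^+ 2.
Proof.
rewrite /phi; case: (leP 0 t) => t0; case: (leP 0 (h + t)) => ht0.
- have -> : (h + t) ^+ 2 - t ^+ 2 - 2 * t * h = h ^+ 2 by ring.
  by rewrite ger0_norm ?sqr_ge0.
- rewrite ler_norml; apply/andP; split; nra.
- rewrite ler_norml; apply/andP; split; nra.
- by rewrite expr0n /= mulr0 mul0r !subrr normr0 sqr_ge0.
Qed.

Lemma phi_cvg (t : R) : (fun h : R => h^-1 *: ((phi \o shift t) (h *: 1) - phi t)) @ 0^' --> 2 * Num.max 0 t.
Proof.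
apply/cvgrPdist_le => e e0.
near=> h.
have hn0 : h != 0 by near: h; exact: nbhs_dnbhs_neq.
have he : `|h| <= e by near: h; exact: dnbhs0_le.
rewrite /= [h *: 1]mulr1 /= [_ *: _]/(_ * _).
have -> : 2 * Num.max 0 t - h^-1 * (phi (h + t) - phi t) = - (h^-1 * (phi (h + t) - phi t - 2 * Num.max 0 t * h)).
  by field.
rewrite normrN normrM normrV ?unitfE //.
rewrite ler_pdivrMl ?normr_gt0 //.
apply: (le_trans (phi_bound t h)).
rewrite -[h ^+ 2]ger0_norm ?sqr_ge0 // normrX expr2; apply: ler_wpM2l => //.
Unshelve. all: by end_near. Qed.

Lemma phi_derivable (t : R) : derivable phi t 1.
Proof. by apply/cvg_ex; eexists; exact: phi_cvg. Qed.

Lemma phi_derive (t : R) : 'D_1 phi t = 2 * Num.max 0 t.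
Proof. exact: (cvg_lim _ (phi_cvg t)). Qed.

Lemma phi_diff (t : R) : differentiable phi t.
Proof. exact/derivable1_diffP/phi_derivable. Qed.

Variable n : nat.
Lemma D_phi_comp (f : 'rV[R]_n -> R) x v : differentiable f x ->
  differentiable (phi \o f) x /\
  'D_v (phi \o f) x = 2 * Num.max 0 (f x) * 'D_v f x.
Proof.
move=> df.
have dpf : differentiable (phi \o f) x by apply: differentiable_comp => //; exact: phi_diff.
split => //.
rewrite deriveE // diff_comp //; last exact: phi_diff.
rewrite /= -(deriveE _ df) -[X in 'd phi _ X]mulr1 linearZ /=.
rewrite -deriveE; last exact: phi_diff.
by rewrite phi_derive [_ *: _]mulrC.
Qed.

Lemma pd_sqnorm (q : nat) (f : 'I_q -> 'rV[R]_n -> R) x j :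
  (forall i, differentiable (f i) x) ->
  pd (@sqnorm_plus R n q f) x j = \sum_(i < q) 2 * Num.max 0 (f i x) * pd (f i) x j.
Proof.
move=> df.
have -> : @sqnorm_plus R n q f = \sum_(i < q) (phi \o f i).
  by apply/funext => y; rewrite fct_sumE.
rewrite /pd derive_sum; last first.
  by move=> i; apply: diff_derivable; case: (@D_phi_comp (f i) x (@unitv R n j) (df i)).
by apply: eq_bigr => i _; case: (@D_phi_comp (f i) x (@unitv R n j) (df i)).
Qed.
End Aux.

Theorem theorem4p3 (R : realType) (n N : nat) (owner : 'I_n -> 'I_N)
  (m p : 'I_N -> nat)
  (theta : 'I_N -> 'rV[R]_n -> R)
  (g : forall nu : 'I_N, 'I_(m nu) -> 'rV[R]_n -> R)
  (h : forall nu : 'I_N, 'I_(p nu) -> 'rV[R]_n -> R)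
  (Htheta : forall nu, C1 (theta nu))
  (Hg : forall nu i, C1 (g nu i))
  (Hh : forall nu k, C1 (h nu k))
  (xb : 'rV[R]_n)
  (HKKT : feas_KKT owner g h xb)
  (HEMFCQ : GNEP_EMFCQ owner g h xb) :
  (forall nu i, g nu i xb <= 0) /\ feas_solution owner g h xb.
Proof.
have Hw : forall nu (w : 'I_(p nu) -> R), (forall k, Num.min (- h nu k xb) (w k) = 0) ->
   forall k, [/\ 0 <= w k, h nu k xb <= 0 & (0 < w k -> h nu k xb = 0)].
  move=> nu w Hm k; have := Hm k; case: (leP (- h nu k xb) (w k)) => hw e.
  - split; [by rewrite -e | by rewrite -oppr_ge0 e | by move=> _; apply/oppr_inj; rewrite e oppr0].
  - split; [by rewrite e | rewrite -oppr_ge0 -e ltW // | by rewrite e ltxx].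
have gfeas : forall nu i, g nu i xb <= 0.
  move=> nu i0; rewrite leNgt; apply/negP => gpos.
  have [w [Hs Hm]] := HKKT nu.
  have [d [Dg Dh]] := HEMFCQ nu.
  pose A i := \sum_(j | owner j == nu) pd (g nu i) xb j * d j.
  pose B k := \sum_(j | owner j == nu) pd (h nu k) xb j * d j.
  have E : 0 = \sum_(i < m nu) 2 * Num.max 0 (g nu i xb) * A i + \sum_(k < p nu) w k * B k.
    have Z : \sum_(j | owner j == nu) d j * (pd (@sqnorm_plus R n (m nu) (g nu)) xb j +
          \sum_(k < p nu) pd (h nu k) xb j * w k) = 0.
      by rewrite big1 // => j /eqP oj; rewrite Hs // mulr0.
    rewrite -{1}Z.
    under eq_bigr => j _ do rewrite mulrDr.
    rewrite big_split /=; congr (_ + _).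
      have PS : forall j, pd (@sqnorm_plus R n (m nu) (g nu)) xb j =
          \sum_(i < m nu) 2 * Num.max 0 (g nu i xb) * pd (g nu i) xb j.
        by move=> j; apply: pd_sqnorm => i; case: (Hg nu i).
      rewrite /A; under eq_bigr => j _ do rewrite PS mulr_sumr.
      rewrite exchange_big /=; apply: eq_bigr => i _; rewrite mulr_sumr.
      by apply: eq_bigr => j _; ring.
    rewrite /B; under eq_bigr => j _ do rewrite mulr_sumr.
    rewrite exchange_big /=; apply: eq_bigr => k _; rewrite mulr_sumr.
    by apply: eq_bigr => j _; ring.
  have HA : forall i, 2 * Num.max 0 (g nu i xb) * A i <= 0.
    move=> i; case: (leP 0 (g nu i xb)) => gi.
      by apply: mulr_ge0_le0; [rewrite mulr_ge0 | rewrite ltW // Dg].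
    by rewrite mulr0 mul0r.
  have HA0 : 2 * Num.max 0 (g nu i0 xb) * A i0 < 0.
    by rewrite (max_r (ltW gpos)) -mulrA pmulr_rlt0 // pmulr_rlt0 // Dg // ltW.
  have HB : forall k, w k * B k <= 0.
    move=> k; have [w0 _ wh] := Hw nu w Hm k.
    move: w0; rewrite le_eqVlt => /orP [/eqP <-|wp]; first by rewrite mul0r.
    by rewrite pmulr_rle0 // ltW // Dh // wh.
  have : \sum_(i < m nu) 2 * Num.max 0 (g nu i xb) * A i + \sum_(k < p nu) w k * B k < 0.
    rewrite (bigD1 i0) //=.
    have s1 : \sum_(i < m nu | i != i0) 2 * Num.max 0 (g nu i xb) * A i <= 0.
      by rewrite -oppr_ge0 -sumrN; apply: sumr_ge0 => i _; rewrite oppr_ge0.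
    have s2 : \sum_(k < p nu) w k * B k <= 0.
      by rewrite -oppr_ge0 -sumrN; apply: sumr_ge0 => k _; rewrite oppr_ge0.
    lra.
  by rewrite -E ltxx.
split => //; split.
  by move=> nu k; have [w [_ Hm]] := HKKT nu; have [] := Hw nu w Hm k.
move=> nu y _.
have -> : @sqnorm_plus R n (m nu) (g nu) xb = 0.
  by rewrite /sqnorm_plus big1 // => i _; rewrite max_l ?gfeas // expr0n.
by apply: sumr_ge0 => i _; exact: sqr_ge0.
Qed.
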